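(* Let $P=P(G,[\omega])$ be a toric poset and $I\subseteq V$. Then $I$ is a toric filter of $P$ if and only if its characteristic vector $\chi_I\in\{0,1\}^V\subseteq\mathbb{R}^V$ is a vertex of the order polytope $\mathcal{O}(P(G,\omega'))$ for some $\omega'\in[\omega]$.
   Context: Toric poset setup: $V=[n]$; $\mathrm{Acyc}(G)$ acyclic orientations; $P(G,\omega)$ the poset given by the transitive closure of $\omega$; $[\omega]$ the class under the equivalence generated by converting a source into a sink; toric chambers (components of $\mathbb{R}^V/\mathbb{Z}^V$ minus the hyperplanes $\{x_i\equiv x_j\bmod 1\}$, $\{i,j\}\in E$) correspond bijectively to classes $[\omega]$; $P(G,[\omega])$ is identified with its chamber $c(P)$. $D^{\mathrm{tor}}_\pi$ is the image in the torus of $\{x\in\mathbb{R}^V:x_i=x_j$ for $i,j$ in a common block of $\pi\}$. Toric filter: $I=\emptyset$, $I=V$, or $\emptyset\ne I\ne V$ with $\overline{c(P)}\cap D^{\mathrm{tor}}_{\{I,V\setminus I\}}$ two-dimensional. Order polytope: $\mathcal{O}(Q)=\{x\in[0,1]^V: x_i\le x_j$ whenever $i\le_Q j\}$. $\chi_I(k)=1$ if $k\in I$ and $0$ otherwise. *)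

(* Defs.v *)
From Stdlib Require Import Reals ZArith Relations.
From mathcomp Require Import all_boot.
Set Implicit Arguments. Unset Strict Implicit. Unset Printing Implicit Defensive.

(* Vertex set V = 'I_n ; a simple graph G is a symmetric irreflexive rel g.
   An orientation is its set of arcs A : {set 'I_n * 'I_n}, (i,j) \in A meaning i -> j. *)

Definition arcs_rel (n : nat) (A : {set 'I_n * 'I_n}) : rel 'I_n :=
  fun u v => (u, v) \in A.

Definition is_acyc (n : nat) (g : rel 'I_n) (A : {set 'I_n * 'I_n}) : Prop :=
  (forall i j, (i, j) \in A -> g i j) /\
  (forall i j, g i j -> (i, j) \in A \/ (j, i) \in A) /\
  (forall i j, (i, j) \in A -> ~~ connect (arcs_rel A) j i).

Definition is_source (n : nat) (A : {set 'I_n * 'I_n}) (i : 'I_n) : bool :=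
  [forall j, (j, i) \notin A].

(* convert the (source) vertex i into a sink: reverse all arcs at i *)
Definition flip (n : nat) (A : {set 'I_n * 'I_n}) (i : 'I_n) : {set 'I_n * 'I_n} :=
  [set p : 'I_n * 'I_n |
     if p.2 == i then (i, p.1) \in A else (p.1 != i) && (p \in A)].

Definition flip_step (n : nat) (g : rel 'I_n) (A B : {set 'I_n * 'I_n}) : Prop :=
  is_acyc g A /\ is_acyc g B /\ exists i, is_source A i /\ B = flip A i.

Definition toric_equiv (n : nat) (g : rel 'I_n) : relation {set 'I_n * 'I_n} :=
  clos_refl_sym_trans _ (@flip_step n g).

Local Open Scope R_scope.

Definition vec (n : nat) := 'I_n -> R.

Definition is_int (r : R) : Prop := exists z : Z, r = IZR z.

(* x (a lift to R^V) lies off the toric hyperplanes x_i = x_j mod 1, {i,j} in E *)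
Definition off_arr (n : nat) (g : rel 'I_n) (x : vec n) : Prop :=
  forall i j, g i j -> ~ is_int (x i - x j).

(* x and y represent the same point of the torus R^V / Z^V *)
Definition tor_eq (n : nat) (x y : vec n) : Prop :=
  forall i, is_int (x i - y i).

(* pi(x) and pi(y) lie in the same connected (= path) component of the
   complement of the toric arrangement; paths in the torus are lifted to R^V *)
Definition same_tor_chamber (n : nat) (g : rel 'I_n) (x y : vec n) : Prop :=
  exists gam : R -> vec n,
    (forall i, continuity (fun t => gam t i)) /\
    (forall i, gam 0 i = x i) /\
    tor_eq (gam 1) y /\
    (forall t, 0 <= t <= 1 -> off_arr g (gam t)).

(* y (a lift) lies in the toric chamber c(P(G,[omega])): the component containing
   pi(x) for a point x of (0,1)^V with x_i < x_j for every arc i -> j of omega *)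
Definition in_chamber (n : nat) (g : rel 'I_n) (A : {set 'I_n * 'I_n}) (y : vec n) : Prop :=
  exists x : vec n,
    (forall i, 0 < x i < 1) /\
    (forall i j, (i, j) \in A -> x i < x j) /\
    same_tor_chamber g x y.

Definition in_closure (n : nat) (g : rel 'I_n) (A : {set 'I_n * 'I_n}) (y : vec n) : Prop :=
  forall eps, eps > 0 ->
    exists s, in_chamber g A s /\ forall i, Rabs (s i - y i) < eps.

(* parametrization (a,b) |-> pi(a chi_I + b chi_{V\I}) of D^tor_{I, V\I} *)
Definition dpt (n : nat) (I : {set 'I_n}) (a b : R) : vec n :=
  fun i => if i \in I then a else b.

(* I is a toric filter of P(G,[omega]); for nonempty proper I, the set
   closure(c(P)) cap D^tor_{I,V\I} is two-dimensional, i.e. (D being a 2-torus)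
   has nonempty interior relative to D *)
Definition toric_filter (n : nat) (g : rel 'I_n) (A : {set 'I_n * 'I_n})
    (I : {set 'I_n}) : Prop :=
  I = set0 \/ I = [set: 'I_n] \/
  (I != set0 /\ I != [set: 'I_n] /\
   exists a0 b0 d, d > 0 /\
     forall a b, Rabs (a - a0) < d -> Rabs (b - b0) < d ->
       in_closure g A (dpt I a b)).

Definition in_order_poly (n : nat) (A : {set 'I_n * 'I_n}) (x : vec n) : Prop :=
  (forall i, 0 <= x i <= 1) /\
  (forall i j, connect (arcs_rel A) i j -> x i <= x j).

Definition is_vertex_order_poly (n : nat) (A : {set 'I_n * 'I_n}) (x : vec n) : Prop :=
  in_order_poly A x /\
  forall (y z : vec n) (t : R), in_order_poly A y -> in_order_poly A z ->
    0 < t < 1 -> (forall i, x i = t * y i + (1 - t) * z i) ->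
    forall i, y i = x i /\ z i = x i.

Definition chi (n : nat) (I : {set 'I_n}) : vec n :=
  fun k => if k \in I then 1 else 0.

(* Main.v *)
Require Import Defs.
From Stdlib Require Import Reals ZArith Relations Lia Lra Classical ClassicalEpsilon.
From mathcomp Require Import all_boot zify.
Set Implicit Arguments. Unset Strict Implicit. Unset Printing Implicit Defensive.


Definition eA n (A : {set 'I_n * 'I_n}) (i j : 'I_n) : Z :=
  if (i, j) \in A then (-1)%Z else 0%Z.

Definition hgt n (A : {set 'I_n * 'I_n}) (v : 'I_n) : nat :=
  #|[set u | connect (arcs_rel A) u v]|.

Lemma connect_clos n (e : rel 'I_n) (P : 'I_n -> 'I_n -> Prop) :
  (forall x, P x x) -> (forall x y z, P x y -> P y z -> P x z) ->
  (forall x y, e x y -> P x y) -> forall x y, connect e x y -> P x y.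
Proof.
move=> Pr Pt Ps x y /connectP [p pth ->]; elim: p x pth => [|z p IH] x /=.
  by move=> _; apply: Pr.
by move/andP=> [exz pth]; apply: Pt (Ps _ _ exz) (IH _ pth).
Qed.

Lemma hgt_lt n (g : rel 'I_n) A i j : is_acyc g A -> (i, j) \in A -> hgt A i < hgt A j.
Proof.
move=> [_ [_ hac]] ij; apply: proper_card; apply/properP; split.
  apply/subsetP => u; rewrite !inE => cui; apply: connect_trans cui (connect1 _).
  exact: ij.
exists j; rewrite !inE ?connect0 //; exact: hac _ _ ij.
Qed.

Lemma hgt_bounds n (A : {set 'I_n * 'I_n}) v : 0 < hgt A v <= n.
Proof.
apply/andP; split.
  by apply/card_gt0P; exists v; rewrite inE connect0.
by apply: leq_trans (max_card _) _; rewrite card_ord.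
Qed.

Lemma src_exists n (g : rel 'I_n) A (S : {set 'I_n}) i0 :
  is_acyc g A -> i0 \in S -> exists i, i \in S /\ forall j, j \in S -> (j, i) \notin A.
Proof.
move=> hA i0S; case: (arg_minnP (hgt A) i0S) => i iS imin.
exists i; split=> // j jS; apply/negP => ji.
have := hgt_lt hA ji; have := imin j jS; lia.
Qed.

Lemma flip_acyc n (g : rel 'I_n) (gs : symmetric g) (gi : irreflexive g) A i :
  is_acyc g A -> is_source A i -> is_acyc g (flip A i).
Proof.
move=> hA; have [hE [hC hN]] := hA; move=> /forallP src.
have srcn : forall j, (j, i) \in A -> False by move=> j; rewrite (negbTE (src j)).
pose f v := if v == i then n.+1 else hgt A v.
have finc : forall u v, (u, v) \in flip A i -> f u < f v.
  move=> u v; rewrite /flip inE /= /f.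
  case: (eqVneq v i) => [vi iu | vi /andP [ui uv]]; first subst v.
    have gu := hE _ _ iu.
    case: (eqVneq u i) => [ui|_]; first by rewrite ui gi in gu.
    by have /andP [_ ] := hgt_bounds A u.
  by rewrite (negbTE ui); exact: hgt_lt hA uv.
split; last split.
- move=> u v; rewrite /flip inE /=; case: (eqVneq v i) => [-> iu | vi /andP [_ uv]].
    by rewrite gs; apply: hE.
  exact: hE.
- move=> u v guv; rewrite /flip !inE /=.
  case: (eqVneq v i) => [vi | vi].
    subst v; case: (hC _ _ guv) => [ui|->]; [by case: (srcn _ ui)| by left].
  case: (eqVneq u i) => [ui | ui].
    subst u; right; rewrite ?eqxx.
    case: (hC _ _ guv) => // vi'; by case: (srcn _ vi').
  by case: (hC _ _ guv) => h; [left; rewrite h | right; rewrite h].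
- move=> u v uv; apply/negP => c.
  have := finc _ _ uv.
  have : f v <= f u.
    apply: (connect_clos (P := fun x y => f x <= f y)) c => //.
      by move=> x y z; apply: leq_trans.
    by move=> x y xy; apply: ltnW; apply: finc.
  lia.
Qed.

Definition erel n (A A' : {set 'I_n * 'I_n}) (g : rel 'I_n) (k : 'I_n -> Z) :=
  forall i j, g i j -> eA A i j = (eA A' i j + k i - k j)%Z.

Lemma equiv_erel n (g : rel 'I_n) (gs : symmetric g) (gi : irreflexive g) A A' :
  toric_equiv g A A' -> exists k, erel A A' g k.
Proof.
elim=> {A A'}.
- move=> A B [hA [hB [i [/forallP src ->]]]].
  have srcn : forall j, (j, i) \in A -> False by move=> j; rewrite (negbTE (src j)).
  exists (fun v => if v == i then (-1)%Z else 0%Z) => u v guv.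
  rewrite /eA /flip inE /=.
  case: (eqVneq v i) => [vi|vi].
    subst v.
    case: (eqVneq u i) => [ui|ui]; first by subst; rewrite gi in guv.
    have [ui'|iu] := hA.2.1 _ _ guv; first by case: (srcn _ ui').
    rewrite iu; case: ifP => [ui'|_]; first by case: (srcn _ ui').
    lia.
  case: (eqVneq u i) => [ui|ui] /=.
    subst u; have [iv|vi'] := hA.2.1 _ _ guv; last by case: (srcn _ vi').
    rewrite iv; lia.
  case: ifP => _; lia.
- move=> A; exists (fun _ => 0%Z) => u v _; lia.
- move=> A B _ [k hk]; exists (fun v => (- k v)%Z) => u v guv.
  have := hk u v guv; lia.
- move=> A B C _ [k1 h1] _ [k2 h2]; exists (fun v => (k1 v + k2 v)%Z) => u v guv.
  have := h1 u v guv; have := h2 u v guv; lia.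
Qed.

Lemma seq_min (T : eqType) (f : T -> Z) (s : seq T) :
  exists m, forall i, i \in s -> (m <= f i)%Z.
Proof.
elim: s => [|x s [m hm]]; first by exists 0%Z.
exists (Z.min m (f x)) => i; rewrite inE => /orP [/eqP ->|/hm]; lia.
Qed.

Lemma seq_max_aux (T : eqType) (f : T -> Z) (s : seq T) x :
  exists i, i \in x :: s /\ forall j, j \in x :: s -> (f j <= f i)%Z.
Proof.
elim: s x => [|y s IH] x.
  by exists x; split; [rewrite inE eqxx | move=> j; rewrite inE => /eqP ->; lia].
have [i [iis hi]] := IH y.
case: (Z.le_gt_cases (f x) (f i)) => h.
  exists i; split; first by rewrite inE iis orbT.
  by move=> j; rewrite inE => /orP [/eqP ->|/hi].
exists x; split; first by rewrite inE eqxx.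
move=> j; rewrite inE => /orP [/eqP ->|/hi]; lia.
Qed.

Lemma seq_max (T : eqType) (f : T -> Z) (s : seq T) x0 :
  x0 \in s -> exists i, i \in s /\ forall j, j \in s -> (f j <= f i)%Z.
Proof. by case: s => [//|x s] _; apply: seq_max_aux. Qed.

Definition mu n (m0 : Z) (k : 'I_n -> Z) := \sum_(v < n) Z.to_nat (k v - m0).

Lemma mu_dec n m0 (k : 'I_n -> Z) i : (m0 < k i)%Z ->
  mu m0 k = (mu m0 (fun v => if v == i then (k v - 1)%Z else k v)).+1.
Proof.
move=> h; rewrite /mu (bigD1 i) //= [in RHS](bigD1 i) //= eqxx.
have -> : \sum_(v < n | v != i) Z.to_nat ((if v == i then (k v - 1)%Z else k v) - m0)
   = \sum_(v < n | v != i) Z.to_nat (k v - m0).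
  by apply: eq_bigr => v /negbTE vi; rewrite vi.
rewrite -addSn; congr (_ + _); rewrite -Z2Nat.inj_succ; [f_equal; lia | lia].
Qed.

Lemma CK_gen n (g : rel 'I_n) (gs : symmetric g) (gi : irreflexive g)
  (A : {set 'I_n * 'I_n}) (hA : is_acyc g A) m0 N : forall A' k, is_acyc g A' -> (forall v, (m0 <= k v)%Z) ->
  mu m0 k <= N -> erel A A' g k -> toric_equiv g A A'.
Proof.
elim: N => [|N IH] A' k hA' hm hmu hr.
all: destruct (classic (forall u v, k u = k v)) as [hc|hnc].
1,3: (have -> : A' = A; last by apply: rst_refl);
  apply/setP => -[u v];
  case e1: ((u, v) \in A); case e2: ((u, v) \in A') => //;
  [have guv := hA.1 _ _ e1 | have guv := hA'.1 _ _ e2];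
  have := hr u v guv; rewrite /eA e1 e2 (hc u v); lia.
all: have [a [b hab]] : exists a b, k a <> k b
  by apply: NNPP => hh; apply: hnc => u v; apply: NNPP => huv; apply: hh; exists u, v.
all: have [i1 [_ hi1]] := seq_max k (mem_enum predT a).
all: pose S := [set v | Z.eqb (k v) (k i1)].
all: have i1S : i1 \in S by rewrite inE Z.eqb_refl.
all: have [i [iS isrc]] := src_exists hA' i1S.
all: have ki : k i = k i1 by move: iS; rewrite inE => /Z.eqb_spec.
all: have hmax : forall j, (k j <= k i)%Z by move=> j; rewrite ki; apply: hi1; rewrite mem_enum.
all: have src : is_source A' i by
  (apply/forallP => j; apply/negP => ji;
   have gji := hA'.1 _ _ ji;
   case: (boolP (j \in S)) => [jS|]; [by move: (isrc _ jS); rewrite ji|];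
   rewrite inE => /Z.eqb_spec kj; have := hmax j; have := hr j i gji; rewrite /eA ji;
   case: ifP => _; lia).
all: have kim : (m0 < k i)%Z by (have := hmax a; have := hmax b; have := hm a; have := hm b; lia).
all: pose k' v := if v == i then (k v - 1)%Z else k v.
all: have hmu' := mu_dec kim.
1: by rewrite hmu' in hmu.
have hsrcn : forall j, (j, i) \in A' -> False by move=> j; move/forallP: src => /(_ j); case: ((j,i) \in A').
apply: rst_trans (IH (flip A' i) k' _ _ _ _) _.
- exact: flip_acyc.
- by move=> v; rewrite /k'; case: eqP => [->|_]; [lia| apply: hm].
- by rewrite hmu' in hmu.
- move=> u v guv; rewrite hr // /eA /flip inE /= /k'.
  case: (eqVneq v i) => [vi|vi].
    subst v; case: (eqVneq u i) => [ui|ui]; first by subst; rewrite gi in guv.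
    have [ui'|iu] := hA'.2.1 _ _ guv; first by case: (hsrcn _ ui').
    rewrite iu; case: ifP => [ui'|_]; first by case: (hsrcn _ ui').
    lia.
  case: (eqVneq u i) => [ui|ui] /=.
    subst u; have [iv|vi'] := hA'.2.1 _ _ guv; last by case: (hsrcn _ vi').
    rewrite iv; lia.
  lia.
- apply: rst_sym; apply: rst_step; split=> //; split; first exact: flip_acyc.
  by exists i.
Qed.

Lemma CK n (g : rel 'I_n) (gs : symmetric g) (gi : irreflexive g)
  (A : {set 'I_n * 'I_n}) (hA : is_acyc g A) A' k : is_acyc g A' -> erel A A' g k -> toric_equiv g A A'.
Proof.
move=> hA' hr; have [m0 hm0] := seq_min k (enum 'I_n).
apply: (CK_gen gs gi hA (m0 := m0) (N := mu m0 k)) => // v; apply: hm0; by rewrite mem_enum.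
Qed.

Local Open Scope R_scope.

Lemma not_int_between (z : Z) r : IZR z < r < IZR z + 1 -> ~ is_int r.
Proof.
move=> [h1 h2] [m hm]; subst r.
have := lt_IZR _ _ h1; rewrite -plus_IZR in h2; have := lt_IZR _ _ h2; lia.
Qed.

Lemma int_unique (a b : Z) r : IZR a < r < IZR a + 1 -> IZR b < r < IZR b + 1 -> a = b.
Proof.
move=> [h1 h2] [h3 h4].
have e1 : IZR a < IZR (b + 1) by rewrite plus_IZR; lra.
have e2 : IZR b < IZR (a + 1) by rewrite plus_IZR; lra.
have := lt_IZR _ _ e1; have := lt_IZR _ _ e2; lia.
Qed.

Lemma path_int (f : R -> R) (z : Z) : continuity f ->
  (forall t, 0 <= t <= 1 -> ~ is_int (f t)) ->
  IZR z < f 0 < IZR z + 1 -> IZR z < f 1 < IZR z + 1.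
Proof.
move=> hc hn [h0 h0'].
have cc : forall c, continuity (fun _ : R => c).
  by move=> c; apply: continuity_const => x y.
split.
- destruct (Rlt_le_dec (IZR z) (f 1)) as [h|h] => //; exfalso.
  destruct (Req_dec (f 1) (IZR z)) as [e|e].
    by apply: (hn 1); [lra| exists z].
  have [t [ht et]] := IVT (fun t => IZR z - f t) 0 1
    (continuity_minus _ _ (cc _) hc) Rlt_0_1 ltac:(lra) ltac:(lra).
  by apply: (hn t ht); exists z; lra.
- destruct (Rlt_le_dec (f 1) (IZR z + 1)) as [h|h] => //; exfalso.
  destruct (Req_dec (f 1) (IZR z + 1)) as [e|e].
    by apply: (hn 1); [lra| exists (z + 1)%Z; rewrite plus_IZR].
  have [t [ht et]] := IVT (fun t => f t - (IZR z + 1)) 0 1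
    (continuity_minus _ _ hc (cc _)) Rlt_0_1 ltac:(lra) ltac:(lra).
  by apply: (hn t ht); exists (z + 1)%Z; rewrite plus_IZR; lra.
Qed.

Lemma lin_ext n (g : rel 'I_n) A : is_acyc g A ->
  exists x : vec n, (forall i, 0 < x i < 1) /\ (forall i j, (i, j) \in A -> x i < x j).
Proof.
move=> hA; exists (fun i => INR (hgt A i) / INR n.+1).
have hN : 0 < INR n.+1 by apply: lt_0_INR; apply/ltP.
split.
- move=> i; have /andP [b1 b2] := hgt_bounds A i.
  have l1 : 0 < INR (hgt A i) by apply: lt_0_INR; apply/ltP.
  have l2 : INR (hgt A i) < INR n.+1 by apply: lt_INR; apply/ltP.
  split; first by apply: Rdiv_lt_0_compat.
  apply: (Rmult_lt_reg_r (INR n.+1)) => //.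
  rewrite /Rdiv Rmult_assoc Rinv_l; lra.
- move=> i j ij; have l : INR (hgt A i) < INR (hgt A j).
    by apply: lt_INR; apply/ltP; apply: hgt_lt hA ij.
  apply: Rmult_lt_compat_r => //; exact: Rinv_0_lt_compat.
Qed.

Lemma ord_edge n (g : rel 'I_n) A (x : vec n) i j : is_acyc g A ->
  (forall i, 0 < x i < 1) -> (forall i j, (i, j) \in A -> x i < x j) -> g i j ->
  IZR (eA A i j) < x i - x j < IZR (eA A i j) + 1.
Proof.
move=> hA h01 hord gij; rewrite /eA.
have := h01 i; have := h01 j.
case E: ((i, j) \in A).
  have := hord _ _ E; rewrite /IZR /IPR; lra.
have [e|e] := hA.2.1 _ _ gij; first by rewrite e in E.
have := hord _ _ e; rewrite /IZR; lra.
Qed.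

Lemma chamber_intro n (g : rel 'I_n) A (y : vec n) : is_acyc g A ->
  (forall i j, g i j -> IZR (eA A i j) < y i - y j < IZR (eA A i j) + 1) ->
  in_chamber g A y.
Proof.
move=> hA hy; have [x [h01 hord]] := lin_ext hA.
exists x; split=> //; split=> //.
exists (fun t i => x i + t * (y i - x i)); split; last split; last split.
- move=> i; apply: continuity_plus; first by apply: continuity_const => ? ?.
  apply: continuity_mult; first exact: derivable_continuous derivable_id.
  by apply: continuity_const => ? ?.
- by move=> i /=; ring.
- by move=> i; exists 0%Z; rewrite /=; ring.
- move=> t ht i j gij.
  have := ord_edge hA h01 hord gij; have := hy i j gij.
  set e := IZR (eA A i j) => h1 h2.
  apply: (not_int_between (z := eA A i j)); rewrite -/e.
  have -> : x i + t * (y i - x i) - (x j + t * (y j - x j))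
     = (1 - t) * (x i - x j) + t * (y i - y j) by ring.
  move: h1 h2; set a := x i - x j; set b := y i - y j => h1 h2.
  have [t0|tp] := Rle_lt_or_eq_dec 0 t (proj1 ht); last first.
    subst t; lra.
  have m1 : 0 <= (1 - t) * (a - e) by apply: Rmult_le_pos; lra.
  have m2 : 0 < t * (b - e) by apply: Rmult_lt_0_compat; lra.
  have m3 : 0 <= (1 - t) * (e + 1 - a) by apply: Rmult_le_pos; lra.
  have m4 : 0 < t * (e + 1 - b) by apply: Rmult_lt_0_compat; lra.
  split; nra.
Qed.

Local Open Scope R_scope.

Lemma equiv_acyc n (g : rel 'I_n) A B : toric_equiv g A B ->
  (is_acyc g A -> is_acyc g B) /\ (is_acyc g B -> is_acyc g A).
Proof.
elim=> {A B}.
- by move=> A B [hA [hB _]].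
- by [].
- by move=> A B _ [h1 h2].
- by move=> A B C _ [h1 h2] _ [h3 h4]; split => h; auto.
Qed.

Lemma chi_vertex n (A : {set 'I_n * 'I_n}) (I : {set 'I_n}) :
  (forall i j, (i, j) \in A -> i \in I -> j \in I) -> is_vertex_order_poly A (chi I).
Proof.
move=> hf; have hp : in_order_poly A (chi I).
  split; first by move=> i; rewrite /chi; case: (i \in I); lra.
  apply: (connect_clos (P := fun x y => chi I x <= chi I y)).
  - by move=> x; lra.
  - by move=> x y z; apply: Rle_trans.
  - move=> x y xy; rewrite /chi; case E: (x \in I).
      by rewrite (hf _ _ xy E); lra.
    by case: (y \in I); lra.
split=> // y z t [hy _] [hz _] ht hx i.
have := hx i; have := hy i; have := hz i.
rewrite /chi; case: (i \in I) => h1 h2 h3.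
  have : (1 - t) * z i <= 1 - t by nra.
  have : t * y i <= t by nra.
  split; nra.
have : 0 <= (1 - t) * z i by nra.
have : 0 <= t * y i by nra.
split; nra.
Qed.

Lemma filter_of_vertex n (A : {set 'I_n * 'I_n}) (I : {set 'I_n}) :
  is_vertex_order_poly A (chi I) -> forall i j, (i, j) \in A -> i \in I -> j \in I.
Proof.
move=> [[_ h] _] i j ij iI.
have := h i j (connect1 ij); rewrite /chi iI.
by case: (j \in I) => //; lra.
Qed.

Definition Rltb (x y : R) : bool := if Rlt_dec x y then true else false.
Lemma RltbP x y : Rltb x y = true <-> x < y.
Proof. by rewrite /Rltb; case: Rlt_dec. Qed.

Lemma choose_c (c0 d : R) : 0 < d -> exists (c : R) (N : Z) (mu : R),
  0 < mu /\ Rabs (c - c0) < d /\ IZR N + mu <= c <= IZR N + 1 - mu.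
Proof.
move=> hd; pose h := Rmin d (1/2).
have h1 : 0 < h by apply: Rmin_glb_lt; lra.
have h2 : h <= d by apply: Rmin_l.
have h3 : h <= 1/2 by apply: Rmin_r.
have [a1 a2] := archimed c0.
pose F := (up c0 - 1)%Z.
have eF : IZR F = IZR (up c0) - 1 by rewrite minus_IZR.
destruct (Rlt_le_dec (c0 - IZR F) (h/4)) as [c1|c1].
  exists (IZR F + h/2), F, (h/4); split; first lra.
  split; last lra.
  apply: Rabs_def1; lra.
destruct (Rlt_le_dec (1 - h/4) (c0 - IZR F)) as [c2|c2].
  exists (IZR F + 1 + h/2), (F + 1)%Z, (h/4); rewrite plus_IZR; split; first lra.
  split; last lra.
  apply: Rabs_def1; lra.
exists c0, F, (h/4); split; first lra.
split; last lra.
rewrite Rminus_diag Rabs_R0; lra.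
Qed.

Local Open Scope R_scope.

Lemma chamber_shift n (g : rel 'I_n) A (y y' : vec n) :
  in_chamber g A y -> (forall i, is_int (y i - y' i)) -> in_chamber g A y'.
Proof.
move=> [x [h1 [h2 [gam [c [g0 [g1 go]]]]]]] hi.
exists x; split=> //; split=> //; exists gam; split=> //; split=> //; split=> // i.
have [z1 e1] := g1 i; have [z2 e2] := hi i.
exists (z1 + z2)%Z; rewrite plus_IZR -e1 -e2; ring.
Qed.

Lemma dir_back n (g : rel 'I_n) (A : {set 'I_n * 'I_n}) (hA : is_acyc g A)
  (gs : symmetric g) (gi : irreflexive g) (I : {set 'I_n}) A' :
  toric_equiv g A A' -> is_vertex_order_poly A' (chi I) -> toric_filter g A I.
Proof.
move=> heq hv; have hf := filter_of_vertex hv.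
have hA' := (proj1 (equiv_acyc heq)) hA.
have [k hk] := equiv_erel gs gi heq.
have [p [p01 pord]] := lin_ext hA'.
case: (eqVneq I set0) => [->|I0]; first by left.
case: (eqVneq I setT) => [->|IT]; first by right; left.
right; right; split=> //; split=> //.
exists (3/4), (1/4), (1/8); split; first lra.
move=> a b ha hb eps heps.
have [ha1 ha2] := Rabs_def2 _ _ ha; have [hb1 hb2] := Rabs_def2 _ _ hb.
pose ep := Rmin (eps/2) (1/16).
have ep0 : 0 < ep by apply: Rmin_glb_lt; lra.
have ep1 : ep <= eps/2 by apply: Rmin_l.
have ep2 : ep <= 1/16 by apply: Rmin_r.
pose s := fun i => dpt I a b i + ep * p i.
have hpe : forall i, 0 < ep * p i < ep.
  move=> i; have := p01 i => [[q1 q2]]; split; first by apply: Rmult_lt_0_compat.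
  by have := Rmult_lt_compat_l ep _ _ ep0 q2; lra.
exists s; split.
- apply: (@chamber_shift _ _ _ (fun i => s i + IZR (k i))); last first.
    by move=> i; exists (k i); ring.
  apply: chamber_intro => // i j gij.
  have s01 : forall i, 0 < s i < 1.
    move=> v; have := hpe v; rewrite /s /dpt; case: (v \in I); lra.
  have sord : forall i j, (i, j) \in A' -> s i < s j.
    move=> u v uv; have pl := pord _ _ uv.
    have pl' := Rmult_lt_compat_l ep _ _ ep0 pl.
    have := hpe u; have := hpe v; rewrite /s /dpt.
    case E1: (u \in I); first by rewrite (hf _ _ uv E1); lra.
    case: (v \in I); lra.
  have := ord_edge hA' s01 sord gij.
  have -> : IZR (eA A i j) = IZR (eA A' i j) + IZR (k i) - IZR (k j).
    by rewrite (hk _ _ gij) minus_IZR plus_IZR.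
  lra.
- move=> i; apply: Rabs_def1; have := hpe i; rewrite /s; lra.
Qed.

Lemma dir_fwd n (g : rel 'I_n) (A : {set 'I_n * 'I_n}) (hA : is_acyc g A)
  (gs : symmetric g) (gi : irreflexive g) (I : {set 'I_n}) :
  toric_filter g A I ->
  exists A', toric_equiv g A A' /\ is_vertex_order_poly A' (chi I).
Proof.
case=> [->|[->|[I0 [IT [a0 [b0 [d [hd H]]]]]]]].
- by exists A; split; [apply: rst_refl| apply: chi_vertex => i j _; rewrite inE].
- by exists A; split; [apply: rst_refl| apply: chi_vertex => i j _; rewrite inE].
have [c [N [mu [mu0 [hc hcN]]]]] := choose_c (a0 - b0) hd.
pose a := b0 + c; pose b := b0.
pose f := c - IZR N; pose be := (1 - f) / 2; pose t := b - be.
have hcl : in_closure g A (dpt I a b).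
  apply: H; first by rewrite /a; have -> : b0 + c - a0 = c - (a0 - b0) by ring.
  by rewrite /b Rminus_diag Rabs_R0.
have [s [[x [x01 [xord [gam [hcont [g0 [g1 hoff]]]]]]] hs]] := hcl (mu/4) ltac:(lra).
pose K i := proj1_sig (constructive_indefinite_description _ (g1 i)).
have hK : forall i, gam 1 i - s i = IZR (K i).
  by move=> i; rewrite /K; case: constructive_indefinite_description.
pose w i := s i - t - (if i \in I then IZR N else 0).
pose kk i := (K i + (if i \in I then N else 0))%Z.
have hkk : forall i, IZR (kk i) = IZR (K i) + (if i \in I then IZR N else 0).
  by move=> i; rewrite /kk plus_IZR; case: (i \in I).
have hw : forall i, (i \in I -> 1/2 < w i < 1) /\ (i \notin I -> 0 < w i < 1/2) /\
    (forall j, i \in I -> j \notin I -> w j < w i).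
  have hsI : forall i, i \in I -> a - mu/4 < s i < a + mu/4.
    move=> i iI; have := Rabs_def2 _ _ (hs i); rewrite /dpt iI; lra.
  have hsn : forall i, i \notin I -> b - mu/4 < s i < b + mu/4.
    move=> i iI; have := Rabs_def2 _ _ (hs i); rewrite /dpt (negbTE iI); lra.
  move=> i; split; last split.
  - move=> iI; have := hsI i iI; rewrite /w iI /t /be /f /a /b; lra.
  - move=> iI; have := hsn i iI; rewrite /w (negbTE iI) /t /be /f /a /b; lra.
  - move=> j iI jI; have := hsI i iI; have := hsn j jI.
    rewrite /w iI (negbTE jI) /t /be /f /a /b; lra.
have w01 : forall i, 0 < w i < 1.
  move=> i; have [h1 [h2 _]] := hw i; case: (boolP (i \in I)) => iI.
    by have := h1 iI; lra.
  by have := h2 iI; lra.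
have hedge : forall i j, g i j ->
    IZR (eA A i j - (kk i - kk j)) < w i - w j < IZR (eA A i j - (kk i - kk j)) + 1.
  move=> i j gij.
  have he := ord_edge hA x01 xord gij.
  have hp := path_int (f := fun t => gam t i - gam t j) (z := eA A i j)
    (continuity_minus _ _ (hcont i) (hcont j))
    (fun t ht => hoff t ht i j gij) ltac:(rewrite /= !g0; exact: he).
  have ew : w i - w j = gam 1 i - gam 1 j - (IZR (kk i) - IZR (kk j)).
    rewrite !hkk; have := hK i; have := hK j; rewrite /w; lra.
  rewrite ew !minus_IZR; lra.
pose As := [set q : 'I_n * 'I_n | g q.1 q.2 && Rltb (w q.1) (w q.2)].
have hne : forall i j, g i j -> w i <> w j.
  move=> i j gij e; apply: (not_int_between (hedge i j gij)).
  by exists 0%Z; rewrite e; ring.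
have hAs : is_acyc g As.
  split; last split.
  - by move=> i j; rewrite inE => /andP [].
  - move=> i j gij; rewrite !inE /= gij -(gs i j) gij /=.
    case: (Rlt_le_dec (w i) (w j)) => h.
      by left; apply/RltbP.
    by right; apply/RltbP; have := hne _ _ gij; lra.
  - move=> i j; rewrite inE /= => /andP [_ /RltbP wij]; apply/negP => c1.
    have : w j <= w i.
      apply: (connect_clos (P := fun x y => w x <= w y)) c1.
      + by move=> z; lra.
      + by move=> x1 y1 z1; apply: Rle_trans.
      + by move=> x1 y1; rewrite /arcs_rel inE /= => /andP [_ /RltbP]; lra.
    lra.
exists As; split.
- apply: (CK gs gi hA (k := kk)) => // i j gij.
  have := hedge i j gij.
  have : IZR (eA As i j) < w i - w j < IZR (eA As i j) + 1.
    rewrite /eA inE /= gij /=; have := w01 i; have := w01 j.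
    case E: (Rltb (w i) (w j)).
      by move/RltbP: E; rewrite /IZR /IPR; lra.
    have : ~ w i < w j by move=> h; move/RltbP: h; rewrite E.
    have := hne _ _ gij; rewrite /IZR; lra.
  move=> h1 h2; have := int_unique h2 h1; lia.
- apply: chi_vertex => i j; rewrite inE /= => /andP [_ /RltbP wij] iI.
  apply: NNPP => jI; move/negP: jI => jI.
  have [_ [_ h3]] := hw i; have := h3 j iI jI; lra.
Qed.

Theorem mainTheorem13 (n : nat) (g : rel 'I_n)
    (g_sym : ssrbool.symmetric g) (g_irr : ssrbool.irreflexive g)
    (A : {set 'I_n * 'I_n}) (hA : is_acyc g A) (I : {set 'I_n}) :
  toric_filter g A I <->
  exists A' : {set 'I_n * 'I_n},
    toric_equiv g A A' /\ is_vertex_order_poly A' (chi I).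
Proof.
split; first exact: dir_fwd.
by move=> [A' [h1 h2]]; apply: dir_back h1 h2.
Qed.
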